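(* Let $R=(V,(\rho_i)_{i\in I})$ be a relational structure and $A\subseteq V$. Then: (1) for every monomorphic decomposition $(V_j)_{j\in J}$ of $R$, the non-empty sets among $A\cap V_j$ ($j\in J$) form a monomorphic decomposition of $R_{\restriction A}$; (2) if $R$ has a monomorphic decomposition into finitely many classes and $R$ embeds into $R_{\restriction A}$, then for each class $C$ of $\mathbf M(R)$, the set $A\cap C$ is a class of $\mathbf M(R_{\restriction A})$ and $|A\cap C|=|C|$.
   Context: A relational structure $R=(V,(\rho_i)_{i\in I})$ consists of a set $V$ and relations $\rho_i\subseteq V^{n_i}$, $n_i$ non-negative integers. For $A\subseteq V$, $R_{\restriction A}=(A,(\rho_i\cap A^{n_i})_{i\in I})$. An isomorphism between structures with the same signature is a bijection preserving each relation in both directions; $R$ embeds into $R'$ if $R$ is isomorphic to a restriction of $R'$. A monomorphic decomposition of $R$ is a partition $(V_j)_{j\in J}$ of $V$ into non-empty sets such that for all finite $F,F'\subseteq V$ with $|F\cap V_j|=|F'\cap V_j|$ for every $j\in J$, the restrictions $R_{\restriction F}$ and $R_{\restriction F'}$ are isomorphic. For $x,y\in V$ write $x\simeq_R y$ if for every finite $F\subseteq V\setminus\{x,y\}$ the restrictions $R_{\restriction F\cup\{x\}}$ and $R_{\restriction F\cup\{y\}}$ are isomorphic. It is known that $\simeq_R$ is an equivalence relation whose classes form a monomorphic decomposition of $R$ of which every monomorphic decomposition of $R$ is a refinement; this partition is the canonical decomposition $\mathbf M(R)$. *)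

(* Defs.v *)
From mathcomp Require Import all_boot.
From Stdlib Require Import List.

Set Implicit Arguments.
Unset Strict Implicit.
Unset Printing Implicit Defensive.

Record relstr (I : Type) (ar : I -> nat) := RelStr {
  carrier :> Type;
  rel : forall i : I, ('I_(ar i) -> carrier) -> Prop
}.

Arguments relstr : clear implicits.
Arguments RelStr {I ar} carrier rel.
Arguments rel {I ar} r i _.

Definition restr I ar (R : relstr I ar) (A : R -> Prop) : relstr I ar :=
  RelStr {x : R | A x} (fun i t => rel R i (fun k => sval (t k))).

Arguments restr {I ar} R A.

Definition isomorphic I ar (R S : relstr I ar) : Prop :=
  exists f : R -> S, bijective f /\
    forall i (t : 'I_(ar i) -> R), rel R i t <-> rel S i (fun k => f (t k)).

Definition embeds I ar (R S : relstr I ar) : Prop :=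
  exists A : S -> Prop, isomorphic R (restr S A).

Definition finite_set (T : Type) (F : T -> Prop) : Prop :=
  exists s : list T, forall x, F x -> List.In x s.

Definition equipotent (S T : Type) : Prop := exists f : S -> T, bijective f.

Definition mono_decomp I ar (R : relstr I ar) (J : Type) (P : J -> R -> Prop)
  : Prop :=
  [/\ (forall j, exists x, P j x),
      (forall x, exists j, P j x),
      (forall j j' x, P j x -> P j' x -> j = j') &
      (forall F F' : R -> Prop, finite_set F -> finite_set F' ->
         (forall j, equipotent {x | F x /\ P j x} {x | F' x /\ P j x}) ->
         isomorphic (restr R F) (restr R F'))].

Arguments mono_decomp {I ar} R {J} P.

Definition simeq I ar (R : relstr I ar) (x y : R) : Prop :=
  forall F : R -> Prop, finite_set F -> (forall z, F z -> z <> x /\ z <> y) ->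
    isomorphic (restr R (fun z => F z \/ z = x)) (restr R (fun z => F z \/ z = y)).

Arguments simeq {I ar} R x y.

(* C is a class of the canonical decomposition M(R), i.e. an equivalence
   class of ≃_R. *)
Definition M_class I ar (R : relstr I ar) (C : R -> Prop) : Prop :=
  exists x : R, forall y : R, C y <-> simeq R x y.

Arguments M_class {I ar} R C.
Arguments isomorphic {I ar} R S.
Arguments embeds {I ar} R S.

(* Main.v *)
Require Import Defs.
From mathcomp Require Import all_boot.
From mathcomp Require boolp classical_sets cardinality.
From Stdlib Require Import ProofIrrelevance ClassicalEpsilon FunctionalExtensionality Classical.

Set Implicit Arguments.
Unset Strict Implicit.
Unset Printing Implicit Defensive.


Lemma sig_eta (T : Type) (P : T -> Prop) (z : sig P) p : exist P (sval z) p = z.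
Proof. by case: z p => x q p /=; rewrite (proof_irrelevance _ p q). Qed.

Lemma sig_inj (T : Type) (P : T -> Prop) (z z' : sig P) : sval z = sval z' -> z = z'.
Proof.
case: z z' => x p [y q] /= e; subst y; by rewrite (proof_irrelevance _ p q).
Qed.

Lemma sig_bij (T U : Type) (D1 : T -> Prop) (D2 : U -> Prop) (phi : T -> U) :
  (forall x, D1 x -> D2 (phi x)) ->
  (forall y, D2 y -> exists x, D1 x /\ phi x = y) ->
  (forall x y, D1 x -> D1 y -> phi x = phi y -> x = y) ->
  exists f : {x | D1 x} -> {y | D2 y}, bijective f /\ forall s, sval (f s) = phi (sval s).
Proof.
move=> H1 H2 H3.
pose f (s : {x | D1 x}) : {y | D2 y} := exist _ (phi (sval s)) (H1 _ (proj2_sig s)).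
pose g (y : {y | D2 y}) : {x | D1 x} :=
  let c := constructive_indefinite_description _ (H2 _ (proj2_sig y)) in
  exist _ (proj1_sig c) (proj1 (proj2_sig c)).
exists f; split => //; exists g.
- move=> s; apply: sig_inj => /=.
  case: (constructive_indefinite_description _ _) => x [Dx ex] /=.
  by apply: H3 => //; exact: proj2_sig.
- move=> y; apply: sig_inj => /=.
  by case: (constructive_indefinite_description _ _) => x [Dx ex] /=.
Qed.

Section Rel.
Variables (I : Type) (ar : I -> nat).

Lemma iso_restr (R1 R2 : relstr I ar) (phi : R1 -> R2) (D1 : R1 -> Prop) (D2 : R2 -> Prop) :
  (forall x, D1 x -> D2 (phi x)) ->
  (forall y, D2 y -> exists x, D1 x /\ phi x = y) ->
  (forall x y, D1 x -> D1 y -> phi x = phi y -> x = y) ->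
  (forall i t, Defs.rel R1 i t <-> Defs.rel R2 i (fun k => phi (t k))) ->
  isomorphic (restr R1 D1) (restr R2 D2).
Proof.
move=> H1 H2 H3 H4.
have [f [bf ef]] := sig_bij H1 H2 H3.
exists f; split => // i t /=.
have -> : (fun k => sval (f (t k))) = (fun k => phi (sval (t k))).
  by apply: functional_extensionality => k; rewrite ef.
exact: H4.
Qed.

Lemma iso_sym (R1 R2 : relstr I ar) : isomorphic R1 R2 -> isomorphic R2 R1.
Proof.
move=> [f [[g fg gf] H]]; exists g; split; first by exists f.
move=> i t; rewrite (H i (fun k => g (t k))).
have -> : (fun k => f (g (t k))) = t by apply: functional_extensionality => k; rewrite gf.
by [].
Qed.

Lemma iso_trans (R1 R2 R3 : relstr I ar) :
  isomorphic R1 R2 -> isomorphic R2 R3 -> isomorphic R1 R3.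
Proof.
move=> [f [bf H]] [g [bg H']]; exists (g \o f); split; first exact: bij_comp.
by move=> i t; rewrite H H'.
Qed.

Lemma iso_ext (R : relstr I ar) (D D' : R -> Prop) :
  (forall x, D x <-> D' x) -> isomorphic (restr R D) (restr R D').
Proof.
move=> H; apply: (@iso_restr R R id) => //.
- by move=> x /H.
- by move=> y /H Dy; exists y.
Qed.

Lemma iso_refl (R : relstr I ar) (D : R -> Prop) : isomorphic (restr R D) (restr R D).
Proof. exact: iso_ext. Qed.

End Rel.

Lemma finite_sub (T : Type) (F G : T -> Prop) (x : T) :
  finite_set F -> (forall w, G w -> F w \/ w = x) -> finite_set G.
Proof.
move=> [s Hs] H; exists (x :: s) => w /H [/Hs|->]; [by right | by left].
Qed.

Lemma finite_img (T U : Type) (F : T -> Prop) (phi : T -> U) :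
  finite_set F -> finite_set (fun z => exists w, F w /\ phi w = z).
Proof.
move=> [s Hs]; exists (List.map phi s) => z [w [Fw <-]].
by apply: List.in_map; apply: Hs.
Qed.

Lemma equip_sym (S T : Type) : equipotent S T -> equipotent T S.
Proof. by move=> [f [g fg gf]]; exists g; exists f. Qed.

Lemma equip_trans (S T U : Type) : equipotent S T -> equipotent T U -> equipotent S U.
Proof. by move=> [f bf] [g bg]; exists (g \o f); apply: bij_comp. Qed.


Section S.
Variables (I : Type) (ar : I -> nat).

Lemma simeq_refl (R : relstr I ar) x : simeq R x x.
Proof. by move=> F _ _; apply: iso_refl. Qed.

Lemma simeq_sym (R : relstr I ar) x y : simeq R x y -> simeq R y x.
Proof.
move=> H F fF aF; apply: iso_sym; apply: H => // z /aF [? ?]; by split.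
Qed.

Lemma simeq_trans (R : relstr I ar) x y z :
  simeq R x y -> simeq R y z -> simeq R x z.
Proof.
move=> Hxy Hyz F fF aF.
case: (classic (x = y)) => [exy|nxy].
  subst y; exact: Hyz.
case: (classic (y = z)) => [eyz|nyz].
  subst z; exact: Hxy.
case: (classic (x = z)) => [exz|nxz].
  subst z; exact: iso_refl.
case: (classic (F y)) => [Fy|nFy].
- pose G w := F w /\ w <> y.
  have fG : finite_set G by apply: (finite_sub (x := x) fF) => w [Fw _]; left.
  apply: iso_trans (_ : isomorphic _ (restr R (fun w => (G w \/ w = x) \/ w = y))) _.
    apply: iso_ext => w; rewrite /G; split.
      case=> [Fw|->]; last by left; right.
      case: (classic (w = y)) => [->|?]; [by right | by left; left].
    by case=> [[[Fw _]|->]|->]; [left|right|left].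
  apply: iso_trans (Hyz (fun w => G w \/ w = x) _ _) _.
  - by apply: (finite_sub (x := x) fG) => w [?|->]; [left|right].
  - move=> w [[Fw nwy]|->]; last by split => // e; apply: nxz.
    by split => //; case: (aF w Fw).
  apply: iso_trans (_ : isomorphic _ (restr R (fun w => (G w \/ w = z) \/ w = x))) _.
    apply: iso_ext => w; split.
      by case=> [[?|->]|->]; [left;left|right|left;right].
    by case=> [[?|->]|->]; [left;left|right|left;right].
  apply: iso_trans (Hxy (fun w => G w \/ w = z) _ _) _.
  - by apply: (finite_sub (x := z) fG) => w [?|->]; [left|right].
  - move=> w [[Fw nwy]|->]; last by split => e; [apply: nxz | apply: nyz].
    by split => //; case: (aF w Fw).
  apply: iso_ext => w; split.
    by case=> [[[Fw _]|->]|->]; [left|right|left].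
  case=> [Fw|->]; last by left; right.
  case: (classic (w = y)) => [->|?]; [by right | by left; left].
- apply: iso_trans (Hxy F fF _) _.
    by move=> w Fw; split; [case: (aF w Fw)| move=> e; subst w].
  apply: Hyz => // w Fw; split; [move=> e; subst w | case: (aF w Fw)] => //.
Qed.

Lemma simeq_reflect (R1 R2 : relstr I ar) (phi : R1 -> R2) :
  injective phi -> (forall i t, Defs.rel R1 i t <-> Defs.rel R2 i (fun k => phi (t k))) ->
  forall x y, simeq R2 (phi x) (phi y) -> simeq R1 x y.
Proof.
move=> inj pres x y H F fF aF.
pose F2 z := exists w, F w /\ phi w = z.
have aF2 : forall z, F2 z -> z <> phi x /\ z <> phi y.
  move=> z [w [Fw <-]]; case: (aF w Fw) => a b.
  by split => /inj.
have iso1 : forall u, isomorphic (restr R1 (fun z => F z \/ z = u))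
                             (restr R2 (fun z => F2 z \/ z = phi u)).
  move=> u; apply: (iso_restr (phi := phi)) => //.
  - by move=> w [Fw|->]; [left; exists w | right].
  - move=> z [[w [Fw <-]]|->]; [exists w; split => //; left | exists u; split => //; right] => //.
  - by move=> w w' _ _ /inj.
apply: iso_trans (iso1 x) _; apply: iso_trans (iso_sym (iso1 y)).
by apply: H => //; apply: finite_img.
Qed.

Lemma block_simeq (R : relstr I ar) (J : Type) (P : J -> R -> Prop) :
  mono_decomp R P -> forall j x y, P j x -> P j y -> simeq R x y.
Proof.
case=> _ _ Hd Hm j x y Px Py F fF aF.
apply: Hm.
- by apply: (finite_sub (x := x) fF) => w [?|->]; [left|right].
- by apply: (finite_sub (x := y) fF) => w [?|->]; [left|right].
move=> j'.
pose sig_ w := if excluded_middle_informative (w = x) then y else w.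
edestruct (@sig_bij R R (fun w => (F w \/ w = x) /\ P j' w)
   (fun w => (F w \/ w = y) /\ P j' w) sig_) as [f [bf _]]; last first; first by exists f.
- move=> w1 w2 [D1 _] [D2 _].
  have key : forall w, (F w \/ w = x) -> sig_ w = y -> w = x.
    move=> w [Fw|->] //; rewrite /sig_; case: excluded_middle_informative => // ne e.
    by move: e => /= e; subst w; case: (aF _ Fw).
  have key2 : forall w, w <> x -> sig_ w = w.
    by move=> w nw; rewrite /sig_; case: excluded_middle_informative.
  have sx : sig_ x = y by rewrite /sig_; case: excluded_middle_informative.
  case: (classic (w1 = x)) => [e1|n1]; case: (classic (w2 = x)) => [e2|n2].
  + by rewrite e1 e2.
  + by rewrite e1 sx => /esym /(key _ D2).
  + by rewrite e2 sx => /(key _ D1).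
  + by rewrite !key2.
- move=> w [[Fw|->] Pw].
    exists w; split; first by split => //; left.
    rewrite /sig_; case: excluded_middle_informative => // e.
    by case: (aF w Fw).
  exists x; split; last by rewrite /sig_; case: excluded_middle_informative.
  by split; [right | have <- := Hd _ _ _ Py Pw].
- move=> w [Dw Pw]; rewrite /sig_; case: excluded_middle_informative => [e|ne].
    subst w; split; first by right.
    by have <- := Hd _ _ _ Px Pw.
  by case: Dw => // Fw; split => //; left.
Qed.
End S.


Lemma equip_empty (S T : Type) : (S -> False) -> (T -> False) -> equipotent S T.
Proof.
move=> eS eT; exists (fun s => match eS s with end).
by exists (fun t => match eT t with end); [move=> s; case: (eS s) | move=> t; case: (eT t)].
Qed.

Lemma equip_restr (T : Type) (A : T -> Prop) (G : {x | A x} -> Prop) (Q : T -> Prop) :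
  equipotent {y : {x | A x} | G y /\ Q (sval y)} {x : T | (exists h : A x, G (exist _ x h)) /\ Q x}.
Proof.
edestruct (@sig_bij _ _ (fun y : {x | A x} => G y /\ Q (sval y))
   (fun x => (exists h : A x, G (exist _ x h)) /\ Q x) sval) as [f [bf _]];
  last first; first by exists f.
- by move=> ? ? _ _; apply: sig_inj.
- by move=> x [[h Gx] Qx]; exists (exist _ x h).
- by move=> [x h] [Gx Qx]; split => //; exists h.
Qed.

Lemma iso_restr2 I ar (R : relstr I ar) (A : R -> Prop) (G : restr R A -> Prop) :
  isomorphic (restr (restr R A) G) (restr R (fun x => exists h : A x, G (exist _ x h))).
Proof.
apply: (iso_restr (phi := fun s : restr R A => sval s)) => //.
- by move=> [x h] Gx; exists h.
- by move=> y [h Gy]; exists (exist _ y h).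
- by move=> ? ? _ _; apply: sig_inj.
Qed.

Lemma finite_restr (T : Type) (A : T -> Prop) (G : {x | A x} -> Prop) :
  finite_set G -> finite_set (fun x => exists h : A x, G (exist _ x h)).
Proof.
move=> [s Hs]; exists (List.map sval s) => x [h Gx].
by have := List.in_map (fun s : {x | A x} => sval s) _ _ (Hs _ Gx).
Qed.

Lemma part1 I ar (R : relstr I ar) (A : R -> Prop) (J : Type) (P : J -> R -> Prop) :
  mono_decomp R P ->
  mono_decomp (restr R A)
       (fun (j : {j : J | exists x, A x /\ P j x}) (y : restr R A) =>
          P (sval j) (sval y)).
Proof.
case=> H1 H2 H3 H4; split.
- by move=> [j [x [Ax Pjx]]]; exists (exist _ x Ax).
- move=> [x Ax]; case: (H2 x) => j Pj.
  by exists (exist _ j (ex_intro _ x (conj Ax Pj))).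
- move=> [j pj] [j' pj'] [x Ax] /= Pj Pj'; apply: sig_inj => /=; exact: H3 Pj Pj'.
- move=> F F' fF fF' Heq.
  apply: iso_trans (iso_restr2 F) _; apply: iso_trans (iso_sym (iso_restr2 F')).
  apply: H4; [exact: finite_restr | exact: finite_restr |] => j.
  case: (classic (exists x, A x /\ P j x)) => [pj|npj].
  + have /= E := Heq (exist _ j pj).
    apply: equip_trans (equip_trans (equip_sym (equip_restr _ _)) E) (equip_restr _ _).
  + apply: equip_empty => -[x [[h _] Px]]; apply: npj; by exists x.
Qed.


Module SBm.
Import boolp classical_sets.
Lemma SB (T : Type) (X Y : T -> Prop) (h : T -> T) :
  (forall x, Y x -> X x) -> (forall x, X x -> Y (h x)) ->
  (forall x y, X x -> X y -> h x = h y -> x = y) ->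
  exists f : {x | Y x} -> {x | X x}, bijective f.
Proof.
move=> YX hXY hinj.
have : cardinality.card_eq (Y : classical_sets.set T) (X : classical_sets.set T).
  apply: cardinality.Cantor_Bernstein.
    by apply: cardinality.subset_card_le.
  have e := @cardinality.inj_card_eq T T X h.
  have e' : cardinality.card_eq (classical_sets.image X h) X.
    apply: e => x y; rewrite !classical_sets.in_setE; exact: hinj.
  rewrite -(cardinality.card_le_eql e').
  apply: cardinality.subset_card_le => y [x Xx <-]; exact: hXY.
move/cardinality.card_bijP => [f [g fg gf]].
have inY : forall x, Y x -> x \in (Y : classical_sets.set T).
  by move=> x; rewrite classical_sets.in_setE.
have inX : forall x, x \in (X : classical_sets.set T) -> X x.
  by move=> x; rewrite classical_sets.in_setE.
have inX' : forall x, X x -> x \in (X : classical_sets.set T).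
  by move=> x; rewrite classical_sets.in_setE.
have inY' : forall x, x \in (Y : classical_sets.set T) -> Y x.
  by move=> x; rewrite classical_sets.in_setE.
exists (fun y => let z := f (exist _ (sval y) (inY _ (proj2_sig y))) in exist _ (sval z) (inX _ (proj2_sig z))).
exists (fun x => let z := g (exist _ (sval x) (inX' _ (proj2_sig x))) in exist _ (sval z) (inY' _ (proj2_sig z))).
- move=> [y py] /=; apply: eq_sig_hprop => /=; first by move=> ?; apply: proof_irrelevance.
  by rewrite sig_eta fg.
- move=> [x px] /=; apply: eq_sig_hprop => /=; first by move=> ?; apply: proof_irrelevance.
  by rewrite sig_eta gf.
Qed.
End SBm.

Definition asb (P : Prop) : bool := if excluded_middle_informative P then true else false.
Lemma asbP (P : Prop) : asb P = true <-> P.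
Proof. by rewrite /asb; case: excluded_middle_informative. Qed.
Lemma asb_iff (P Q : Prop) : (P <-> Q) -> asb P = asb Q.
Proof.
move=> H; rewrite /asb; do 2 case: excluded_middle_informative => //.
- by move=> nq p; case: nq; apply/H.
- by move=> q np; case: np; apply/H.
Qed.

Lemma part2 I ar (R : relstr I ar) (A : R -> Prop) (J : finType) (P : J -> R -> Prop) :
  mono_decomp R P -> embeds R (restr R A) ->
   forall C : R -> Prop, M_class R C ->
     M_class (restr R A) (fun y : restr R A => C (sval y)) /\
     equipotent {x : R | A x /\ C x} {x : R | C x}.
Proof.
move=> HP [B [f [bf pres]]] C [x0 HC].
pose phi (x : R) : restr R A := sval (f x).
pose g (x : R) : R := sval (phi x).
have phi_inj : injective phi.
  by move=> x y /sig_inj /(bij_inj bf).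
have g_inj : injective g by move=> x y /sig_inj /phi_inj.
have gA : forall x, A (g x) by move=> x; exact: (proj2_sig (phi x)).
have R1 : forall x y, simeq (restr R A) (phi x) (phi y) -> simeq R x y.
  by apply: simeq_reflect => // i t; apply: pres.
have R2 : forall u v : restr R A, simeq R (sval u) (sval v) -> simeq (restr R A) u v.
  apply: (@simeq_reflect _ _ (restr R A) R (fun s => sval s)) => //.
  by move=> ? ?; apply: sig_inj.
have R3 : forall x y, simeq R (g x) (g y) -> simeq R x y.
  by apply: simeq_reflect => // i t; apply: pres.
have HP' := HP; case: HP' => H1 H2 _ _.
pose r (j : J) : R := proj1_sig (constructive_indefinite_description _ (H1 j)).
have Pr : forall j, P j (r j) by move=> j; exact: proj2_sig (constructive_indefinite_description _ (H1 j)).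
pose blk (x : R) : J := proj1_sig (constructive_indefinite_description _ (H2 x)).
have Pblk : forall x, P (blk x) x by move=> x; exact: proj2_sig (constructive_indefinite_description _ (H2 x)).
have bl : forall j x y, P j x -> P j y -> simeq R x y by move=> j x y; apply: block_simeq.
pose canon (j : J) : J := odflt j [pick k | asb (simeq R (r k) (r j))].
have canon_sim : forall j, simeq R (r (canon j)) (r j).
  move=> j; rewrite /canon; case: pickP => [k /asbP //| _]; exact: simeq_refl.
have canon_eq : forall j j', simeq R (r j) (r j') -> canon j = canon j'.
  move=> j j' H; rewrite /canon.
  have -> : [pick k | asb (simeq R (r k) (r j))] = [pick k | asb (simeq R (r k) (r j'))].
    apply: eq_pick => k; apply: asb_iff; split => Hk.
      exact: simeq_trans Hk H.
    exact: simeq_trans Hk (simeq_sym H).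
  case: pickP => // H0; have := H0 j'; by rewrite (proj2 (asbP (simeq R (r j') (r j'))) (@simeq_refl _ _ R (r j'))).
have canon_idem : forall j, canon (canon j) = canon j by move=> j; apply: canon_eq.
pose G (j : J) : J := blk (g (r j)).
pose h (j : J) : J := canon (G j).
pose Rep := canon @: [set: J].
have inRep : forall j, j \in Rep -> canon j = j.
  by move=> j /imsetP [k _ ->]; apply: canon_idem.
have hinj : {in Rep &, injective h}.
  move=> j j' /inRep ej /inRep ej' E.
  rewrite -ej -ej'; apply: canon_eq; apply: R3.
  apply: simeq_trans (bl _ _ _ (Pblk (g (r j))) (Pr _)) _.
  apply: simeq_trans (simeq_sym (canon_sim _)) _.
  rewrite /h in E; rewrite E.
  apply: simeq_trans (canon_sim _) _.
  exact: bl _ _ _ (Pr _) (Pblk _).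
have hRep : h @: Rep = Rep.
  apply/eqP; rewrite eqEcard (card_in_imset hinj) leqnn andbT.
  by apply/subsetP => k /imsetP [j _ ->]; rewrite /h; apply: imset_f.
have cover : forall y : R, exists j, j \in Rep /\ simeq R y (g (r j)).
  move=> y.
  have : canon (blk y) \in h @: Rep by rewrite hRep; apply: imset_f.
  case/imsetP => j jR E; exists j; split => //.
  apply: simeq_trans (bl _ _ _ (Pblk y) (Pr _)) _.
  apply: simeq_trans (simeq_sym (canon_sim _)) _.
  rewrite E /h.
  apply: simeq_trans (canon_sim _) _.
  exact: bl _ _ _ (Pr _) (Pblk _).
have pres_sim : forall x y, simeq R x y -> simeq R (g x) (g y).
  move=> x y Hxy.
  have [j [jR Hj]] := cover (g x).
  have [j' [jR' Hj']] := cover (g y).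
  have ejj : j = j'.
    rewrite -(inRep _ jR) -(inRep _ jR'); apply: canon_eq.
    apply: simeq_trans (simeq_sym (R3 _ _ Hj)) _.
    exact: simeq_trans Hxy (R3 _ _ Hj').
  subst j'; exact: simeq_trans Hj (simeq_sym Hj').
split.
- have [j [_ Hj]] := cover x0.
  exists (phi (r j)) => z; rewrite HC; split => Hz.
    apply: R2; exact: simeq_trans (simeq_sym Hj) Hz.
  have [j2 [_ Hj2]] := cover (sval z).
  have Hz2 : simeq (restr R A) z (phi (r j2)) by apply: R2.
  have := R1 _ _ (simeq_trans Hz Hz2) => /pres_sim H12.
  exact: simeq_trans Hj (simeq_trans H12 (simeq_sym Hj2)).
- have iter_refl : forall n u v, simeq R (iter n g u) (iter n g v) -> simeq R u v.
    by elim=> [//|n IH] u v /= /R3 /IH.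
  have iter_pres : forall n u v, simeq R u v -> simeq R (iter n g u) (iter n g v).
    by elim=> [//|n IH] u v /= /IH /pres_sim.
  have iter_inj : forall n, injective (iter n g).
    by elim=> [//|n IH] u v /= /g_inj /IH.
  pose p (i : 'I_(#|J|.+1)) : J := blk (iter i g x0).
  have [i1 [i2 [lt12 e12]]] : exists i1 i2 : 'I_(#|J|.+1), i1 < i2 /\ p i1 = p i2.
    apply: NNPP => Hn.
    have pinj : injective p.
      move=> a b e; apply: val_inj => /=.
      case: (ltngtP a b) => // H; case: Hn.
        by exists a, b.
      by exists b, a.
    by have := leq_card p pinj; rewrite card_ord ltnn.
  pose m := i2 - i1.
  have m_pos : 0 < m by rewrite subn_gt0.
  have xm : simeq R x0 (iter m g x0).
    apply: (iter_refl i1); rewrite -iterD subnKC; last exact: ltnW.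
    by apply: bl _ _ _ (Pblk _) _; rewrite /p in e12; rewrite e12; apply: Pblk.
  apply: (@SBm.SB R C (fun x => A x /\ C x) (iter m g)).
  + by move=> x [].
  + move=> x /HC Cx; split.
      by move: m_pos; rewrite /m; case: (i2 - i1) => // n _ /=; apply: gA.
    apply/HC; exact: simeq_trans xm (iter_pres _ _ _ Cx).
  + by move=> x y _ _ /iter_inj.
Qed.

Theorem proposition4p3 (I : Type) (ar : I -> nat) (R : relstr I ar)
  (A : R -> Prop) :
  (forall (J : Type) (P : J -> R -> Prop), mono_decomp R P ->
     mono_decomp (restr R A)
       (fun (j : {j : J | exists x, A x /\ P j x}) (y : restr R A) =>
          P (sval j) (sval y)))
  /\
  ((exists (J : finType) (P : J -> R -> Prop), mono_decomp R P) ->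
   embeds R (restr R A) ->
   forall C : R -> Prop, M_class R C ->
     M_class (restr R A) (fun y : restr R A => C (sval y)) /\
     equipotent {x : R | A x /\ C x} {x : R | C x}).
Proof.
split.
- by move=> J P HP; apply: part1.
- by move=> [J [P HP]] emb C HC; apply: (part2 HP emb).
Qed.
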